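(* For every map $M$, any two members of $\Gamma(M)$ have the same deficiency.
   Context: A map is a triple $X=(C_X,v_X,f_X)$ where $C_X$ is a finite cubic graph (multiple edges allowed) and $v_X,f_X$ are disjoint perfect matchings whose union is a disjoint union of 4-cycles, the squares of $X$. $a_X=E(C_X)\setminus(v_X\cup f_X)$; $z_X$ is the perfect matching on $V(C_X)$ of diagonals of the squares; $Q_X=C_X\cup z_X$. $G_X$ has as vertices the cycles of $v_X\cup a_X$, as edges the squares of $X$, each square joining the cycles containing its two $v_X$-edges. The dual of $X$ is $(C_X,f_X,v_X)$ and the phial is $(Q_X\setminus v_X,z_X,f_X)$; the edge sets of the graphs of $X$, its dual and its phial are all identified with the squares of $X$. With $V_X,F_X,Z_X$ the $GF(2)$-coboundary spaces of the graphs of $X$, its dual and its phial, and $V_X^\perp$ the cycle space of $G_X$ (orthogonal complement w.r.t. $\langle A,B\rangle=|A\cap B|\bmod2$), the deficiency is $\mathrm{def}(X)=\dim V_X^\perp-\dim(F_X+Z_X)$ (one has $F_X+Z_X\subseteq V_X^\perp$). For a map $M$, $\Gamma(M)$ is the set of the six maps $(Q_M\setminus z_M,v_M,f_M)$, $(Q_M\setminus z_M,f_M,v_M)$, $(Q_M\setminus v_M,f_M,z_M)$, $(Q_M\setminus v_M,z_M,f_M)$, $(Q_M\setminus f_M,z_M,v_M)$, $(Q_M\setminus f_M,v_M,z_M)$. *)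

(* Defs.v *)
From Stdlib Require List.
From HB Require Import structures.
From mathcomp Require Import all_boot all_order all_algebra.
Set Implicit Arguments. Unset Strict Implicit. Unset Printing Implicit Defensive.
Import GRing.Theory.

(* A map X = (C_X, v_X, f_X) is encoded on its vertex set V (a finType) by
   three fixed-point-free involutions mv, mf, ma : V -> V: the partners of a
   vertex in the perfect matchings v_X, f_X and a_X respectively.  Since C_X
   is cubic and v_X, f_X are perfect matchings, a_X (the remaining edges) is
   a perfect matching too, so C_X = v_X + f_X + a_X (parallel edges between a
   and v or f are allowed, as in a multigraph). *)
Record map_data (V : finType) := MapData { mv : V -> V; mf : V -> V; ma : V -> V }.

Definition fpf_involution (V : finType) (s : V -> V) : Prop :=
  forall x, s (s x) = x /\ s x != x.

(* v_X and f_X disjoint perfect matchings whose union is a disjoint union of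
   4-cycles (the squares). *)
Definition is_map (V : finType) (X : map_data V) : Prop :=
  [/\ fpf_involution (mv X), fpf_involution (mf X), fpf_involution (ma X),
      (forall x, mv X x != mf X x) &
      (forall x, mf X (mv X (mf X (mv X x))) = x)].

(* z_X: the matching of diagonals of the squares: x is matched to the vertex
   opposite to it in its square, namely f (v x). *)
Definition mz (V : finType) (X : map_data V) : V -> V := mf X \o mv X.

Definition squares (V : finType) (X : map_data V) : {set {set V}} :=
  [set [set x; mv X x; mf X x; mf X (mv X x)] | x : V].

Definition pa_rel (V : finType) (p a : V -> V) : rel V :=
  [rel x y | (y == p x) || (y == a x)].
Definition cycles_of (V : finType) (p a : V -> V) : {set {set V}} :=
  [set [set y | connect (pa_rel p a) x y] | x : V].

(* Graph whose vertices are the cycles of p + a and whose edges are the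
   squares, each square s joining the cycles containing its two p-edges.
   Incidence (mod 2) of vertex c and edge s = number of ends of s at c,
   i.e. the number of p-edges of s contained in c. *)
Definition p_edges (V : finType) (p : V -> V) (s : {set V}) : {set {set V}} :=
  [set [set y; p y] | y in s].
Definition incid (V : finType) (p : V -> V) (c s : {set V}) : 'F_2 :=
  ((#|[set e in p_edges p s | e \subset c]|)%:R)%R.

(* Incidence matrix over GF(2) (rows: vertices = cycles of p + a, columns:
   edges = the squares S).  Its row space is the coboundary space. *)
Definition cobd_mx (V : finType) (p a : V -> V) (S : {set {set V}}) :
  'M['F_2]_(#|cycles_of p a|, #|S|) :=
  \matrix_(i, j) incid p (enum_val i) (enum_val j).

(* Deficiency of X:
   V_X : graph of X        (matching v_X, cycles of v_X + a_X)
   F_X : graph of the dual  (C_X, f_X, v_X): cycles of f_X + a_X, f-edges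
   Z_X : graph of the phial (Q_X \ v_X, z_X, f_X): cycles of z_X + a_X, z-edges
   All edge sets are identified with the squares of X.
   V_X^perp = orthogonal complement of V_X, i.e. kermx (V_X)^T.
   def X = dim V_X^perp - dim (F_X + Z_X). *)
Definition deficiency (V : finType) (X : map_data V) : int :=
  let S := squares X in
  let BV := cobd_mx (mv X) (ma X) S in
  let BF := cobd_mx (mf X) (ma X) S in
  let BZ := cobd_mx (mz X) (ma X) S in
  (\rank (kermx BV^T))%:Z - (\rank (BF + BZ)%MS)%:Z.

(* In each case the cubic graph is Q_M minus one of
   the matchings v_M, f_M, z_M and the two others are the new (v, f); the
   remaining (third) matching of that cubic graph is a_M in all cases. *)
Definition Gamma (V : finType) (M : map_data V) : list (map_data V) :=
  [:: MapData (mv M) (mf M) (ma M);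
      MapData (mf M) (mv M) (ma M);
      MapData (mf M) (mz M) (ma M);
      MapData (mz M) (mf M) (ma M);
      MapData (mz M) (mv M) (ma M);
      MapData (mv M) (mz M) (ma M)].

Definition in_Gamma (V : finType) (M X : map_data V) : Prop := List.In X (Gamma M).

(* Main.v *)
Require Import Defs.
From mathcomp Require Import all_boot all_order all_algebra.
From mathcomp Require Import zify.
From Stdlib Require Import FunctionalExtensionality.
Import GRing.Theory.
Open Scope ring_scope.

Lemma F2_4 (A B C D : 'F_2) : A + B = C + D -> B + D = A + C.
Proof. move: A B C D; do 4! case=> [[|[|//]]] ?. all: move=> H. all: try apply/val_inj; move: H => /(congr1 val) /=. all: by []. Qed.
Lemma F2_2 (A B : 'F_2) : A + A + B = B.
Proof. move: A B; do 2! case=> [[|[|//]]] ?. all: by apply/val_inj. Qed.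

Section Gen.
Variables (V : finType) (p o a : V -> V).
Hypothesis pK : forall x, p (p x) = x.
Hypothesis aK : forall x, a (a x) = x.

Lemma cyc_closed c : c \in cycles_of p a ->
  forall y, (p y \in c) = (y \in c) /\ (a y \in c) = (y \in c).
Proof.
case/imsetP => x0 _ -> y; rewrite !inE; split; apply/idP/idP => h.
- by apply: connect_trans h (connect1 _); rewrite /pa_rel /= pK eqxx.
- by apply: connect_trans h (connect1 _); rewrite /pa_rel /= eqxx.
- by apply: connect_trans h (connect1 _); rewrite /pa_rel /= aK eqxx orbT.
- by apply: connect_trans h (connect1 _); rewrite /pa_rel /= eqxx orbT.
Qed.

Lemma pa_sym : symmetric (pa_rel p a).
Proof.
move=> x y; rewrite /pa_rel /=; apply/idP/idP => /orP [] /eqP ->; by rewrite ?pK ?aK eqxx ?orbT.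
Qed.

Hypothesis poK : forall y, p (o y) = o (p y).
Hypothesis ox_x : forall x, o x != x.
Hypothesis ox_px : forall x, o x != p x.

Lemma incid_sq (c : {set V}) x : (forall y, (p y \in c) = (y \in c)) ->
  incid p c [set x; p x; o x; o (p x)] = ((x \in c) : nat)%:R + ((o x \in c) : nat)%:R.
Proof.
move=> Hc.
have E : p_edges p [set x; p x; o x; o (p x)] = [set [set x; p x]; [set o x; p (o x)]].
  apply/setP => e; rewrite !inE; apply/imsetP/idP.
    case=> y; rewrite !inE => /orP [/orP [/orP [] | ] | ] /eqP -> ->.
    - by rewrite eqxx.
    - by rewrite pK setUC eqxx.
    - by rewrite eqxx orbT.
    - by apply/orP; right; rewrite [X in X == _]setUC !poK pK.
  by case/orP => /eqP ->; [exists x | exists (o x)]; rewrite ?inE ?eqxx ?orbT.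
have ne : [set x; p x] != [set o x; p (o x)].
  apply/eqP => Ee; have : o x \in [set x; p x] by rewrite Ee !inE eqxx.
  by rewrite !inE (negbTE (ox_x x)) (negbTE (ox_px x)).
have s1 : ([set x; p x] \subset c) = (x \in c) by rewrite subUset !sub1set Hc andbb.
have s2 : ([set o x; p (o x)] \subset c) = (o x \in c) by rewrite subUset !sub1set Hc andbb.
rewrite /incid E -natrD; congr (_%:R).
case: (x \in c) s1 => s1; case: (o x \in c) s2 => s2.
- rewrite (_ : [set _ in _ | _] = [set [set x; p x]; [set o x; p (o x)]]) ?cards2 ?ne //.
  by apply/setP => e; rewrite !inE; case/boolP: (e == _) => [/eqP ->|]; rewrite ?s1 ?s2 //= => _; case/boolP: (e == _) => [/eqP ->|]; rewrite ?s2.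
- rewrite (_ : [set _ in _ | _] = [set [set x; p x]]) ?cards1 //.
  apply/setP => e; rewrite !inE; case/boolP: (e == _) => [/eqP ->|]; rewrite ?s1 //= => _.
  by case/boolP: (e == _) => [/eqP ->|]; rewrite ?s2.
- rewrite (_ : [set _ in _ | _] = [set [set o x; p (o x)]]) ?cards1 //.
  apply/setP => e; rewrite !inE; case/boolP: (e == [set o x; _]) => [/eqP ->|]; rewrite ?s2 ?orbT //= => _.
  by case/boolP: (e == _) => [/eqP ->|]; rewrite ?s1.
- rewrite (_ : [set _ in _ | _] = set0) ?cards0 //.
  apply/setP => e; rewrite !inE; case/boolP: (e == [set o x; _]) => [/eqP ->|]; rewrite ?s2 ?andbF //= => _.
  by case/boolP: (e == _) => [/eqP ->|]; rewrite ?s1.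
Qed.


Lemma sub_rep (S : {set {set V}}) (u : 'rV['F_2]_#|S|) :
  (u <= cobd_mx p a S)%MS ->
  exists g : V -> 'F_2, [/\ (forall y, g (p y) = g y), (forall y, g (a y) = g y) &
    forall j x, enum_val j = [set x; p x; o x; o (p x)] -> u 0 j = g x + g (o x)].
Proof.
case/submxP => w ->.
exists (fun y => \sum_(i < #|cycles_of p a|) w 0 i * ((y \in enum_val i) : nat)%:R).
split.
- move=> y; apply: eq_bigr => i _; by case: (cyc_closed _ (enum_valP i) y) => ->.
- move=> y; apply: eq_bigr => i _; by case: (cyc_closed _ (enum_valP i) y) => _ ->.
move=> j x E; rewrite !mxE -big_split; apply: eq_bigr => i _.
rewrite /cobd_mx mxE E incid_sq ?mulrDr //.
by move=> y; case: (cyc_closed _ (enum_valP i) y).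
Qed.

Lemma sum_ind (g : V -> 'F_2) y :
  (forall y, g (p y) = g y) -> (forall y, g (a y) = g y) ->
  \sum_(i < #|cycles_of p a|)
     (if [pick z in (enum_val i : {set V})] is Some z then g z else 0) *
     ((y \in (enum_val i : {set V})) : nat)%:R = g y.
Proof.
move=> gp ga.
have cy : [set z | connect (pa_rel p a) y z] \in cycles_of p a by apply/imsetP; exists y.
have csym := sym_connect_sym pa_sym.
rewrite (bigD1 (enum_rank_in cy [set z | connect (pa_rel p a) y z])) //=.
rewrite big1 ?addr0.
  rewrite enum_rankK_in // inE connect0 mulr1.
  case: pickP => [z|]; last by move/(_ y); rewrite inE connect0.
  rewrite inE => yz.
  have cl : closed (pa_rel p a) [pred t | g t == g y].
    move=> s t; rewrite /pa_rel /= => /orP [] /eqP ->; by rewrite !inE ?gp ?ga.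
  by have := closed_connect cl yz; rewrite !inE eqxx => /esym/eqP.
move=> i ne; case yi: (y \in enum_val i); last by rewrite mulr0.
case/negP: ne; apply/eqP/enum_val_inj; rewrite enum_rankK_in //.
have := enum_valP i; case/imsetP => z _ Ez; rewrite Ez in yi *.
apply/setP => t; rewrite !inE; move: yi; rewrite inE => zy.
by rewrite (same_connect csym zy).
Qed.

Lemma sup_rep (S : {set {set V}}) (u : 'rV['F_2]_#|S|) (g : V -> 'F_2) :
  (forall y, g (p y) = g y) -> (forall y, g (a y) = g y) ->
  (forall s, s \in S -> exists x, s = [set x; p x; o x; o (p x)]) ->
  (forall j x, enum_val j = [set x; p x; o x; o (p x)] -> u 0 j = g x + g (o x)) ->
  (u <= cobd_mx p a S)%MS.
Proof.
move=> gp ga HS Hu; apply/submxP.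
exists (\row_(i < #|cycles_of p a|)
     (if [pick z in (enum_val i : {set V})] is Some z then g z else 0)).
apply/rowP => j; rewrite !mxE.
have [x Ex] := HS _ (enum_valP j).
rewrite (Hu j x Ex) -(sum_ind g x gp ga) -(sum_ind g (o x) gp ga) -big_split.
apply: eq_bigr => i _; rewrite /cobd_mx !mxE Ex incid_sq ?mulrDr //.
by move=> y; case: (cyc_closed _ (enum_valP i) y).
Qed.

End Gen.

Ltac perm4 := apply/setP => ?; rewrite !inE; do ![case: (_ == _)]; by [].

Section Key.
Variables (V : finType) (p q a r : V -> V) (S : {set {set V}}).
Hypotheses (pK : forall x, p (p x) = x) (qK : forall x, q (q x) = x)
  (aK : forall x, a (a x) = x) (pq : forall x, p (q x) = q (p x))
  (rE : forall x, r x = q (p x)) (qx_x : forall x, q x != x)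
  (px_x : forall x, p x != x) (qx_px : forall x, q x != p x)
  (HS : S = [set [set x; p x; q x; q (p x)] | x : V]).

Lemma key : (cobd_mx p a S :&: cobd_mx q a S <= cobd_mx r a S)%MS.
Proof.
apply/row_subP => i; set u := row i _.
have uP : (u <= cobd_mx p a S)%MS := submx_trans (row_sub i _) (capmxSl _ _).
have uQ : (u <= cobd_mx q a S)%MS := submx_trans (row_sub i _) (capmxSr _ _).
have qpK x : q (p x) = p (q x) by rewrite pq.
have px_qx x : p x != q x by rewrite eq_sym.
have [g [gp ga Hg]] := @sub_rep V p q a pK aK pq qx_x qx_px S u uP.
have [h [hq ha Hh]] := @sub_rep V q p a qK aK qpK px_x px_qx S u uQ.
have rK x : r (r x) = x by rewrite !rE -pq qK pK.
have rp x : r (p x) = p (r x) by rewrite !rE pK pq pK.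
have px_rx x : p x != r x by rewrite rE; apply/eqP => E; move: (qx_x (p x)); rewrite -E eqxx.
have sq1 x : [set x; p x; q x; q (p x)] \in S by rewrite HS; apply/imsetP; exists x.
have eqA x : [set x; q x; p x; p (q x)] = [set x; p x; q x; q (p x)] by rewrite pq; perm4.
have eqB x : [set x; r x; p x; p (r x)] = [set x; p x; q x; q (p x)].
  by rewrite rE pq pK; perm4.
apply: (@sup_rep V r p a rK aK rp px_x px_rx S u (fun y => g y + h y)).
- move=> y; rewrite rE hq -pq gp.
  have E1 := Hg _ _ (enum_rankK_in (sq1 y) (sq1 y)).
  have E2 := Hh _ y (etrans (enum_rankK_in (sq1 y) (sq1 y)) (esym (eqA y))).
  rewrite E1 in E2; exact: F2_4.
- by move=> y; rewrite ga ha.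
- move=> s; rewrite HS => /imsetP [x _ ->]; exists x; by rewrite eqB.
move=> j x Ej.
rewrite (Hh j x (etrans Ej (etrans (eqB x) (esym (eqA x))))) gp.
by move: (g x) (h x) (h (p x)); do 3! case=> [[|[|//]]] ?; apply/val_inj.
Qed.

End Key.

Lemma rk3 (m1 m2 m3 n : nat) (A : 'M['F_2]_(m1, n)) (B : 'M_(m2, n)) (C : 'M_(m3, n)) :
  (A :&: B <= C)%MS -> \rank (A :&: B)%MS = \rank (A :&: B :&: C)%MS.
Proof.
move=> H; apply: eqmx_rank; apply/andP; split; last exact: capmxSl.
by rewrite sub_capmx submx_refl H.
Qed.

Lemma ar (n a b c s t tot : nat) : tot = (a + b + c)%N -> (a <= n)%N -> (s + t = b + c)%N ->
  (n - a)%:Z - s%:Z = n%:Z - tot%:Z + t%:Z.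
Proof. move=> ->; lia. Qed.

Lemma def_eq (V : finType) (X : map_data V) p q r a S :
  mv X = p -> mf X = q -> mz X = r -> ma X = a -> squares X = S ->
  deficiency X = (#|S| - \rank (cobd_mx p a S))%:Z
                 - (\rank (cobd_mx q a S + cobd_mx r a S)%MS)%:Z.
Proof. by move=> <- <- <- <- <-; rewrite /deficiency /= mxrank_ker mxrank_tr. Qed.

Theorem lemma2p4 (V : finType) (M : map_data V) :
  is_map M ->
  forall X Y : map_data V, in_Gamma M X -> in_Gamma M Y ->
  deficiency X = deficiency Y.
Proof.
move=> [vI fI aI vnf fvfv].
have vK x : mv M (mv M x) = x := (vI x).1.
have fK x : mf M (mf M x) = x := (fI x).1.
have aK x : ma M (ma M x) = x := (aI x).1.
have vx_x x : mv M x != x := (vI x).2.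
have fx_x x : mf M x != x := (fI x).2.
have fv x : mf M (mv M x) = mv M (mf M x) by move: (fvfv (mv M (mf M x))); rewrite vK fK.
have zx_x x : mz M x != x.
  apply/negP => /eqP E; have := vnf x; rewrite -[X in _ != X](congr1 (mf M) E) /mz /= fK eqxx //.
have zx_vx x : mz M x != mv M x by exact: fx_x.
have zx_fx x : mz M x != mf M x.
  apply/negP => /eqP E; move: (vx_x x); rewrite -[X in mv M x != X]fK -E /mz /= fK eqxx //.
have fx_vx x : mf M x != mv M x by rewrite eq_sym.
set S := squares M.
set Bv := cobd_mx (mv M) (ma M) S.
set Bf := cobd_mx (mf M) (ma M) S.
set Bz := cobd_mx (mz M) (ma M) S.
have K1 : (Bv :&: Bf <= Bz)%MS.
  apply: (@key V (mv M) (mf M) (ma M) (mz M) S vK fK aK) => // x; by rewrite fv.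
have K2 : (Bv :&: Bz <= Bf)%MS.
  apply: (@key V (mv M) (mz M) (ma M) (mf M) S) => //.
  all: try (by move=> x; rewrite /mz /= ?(fv, fK, vK)).
  all: try (by rewrite /S /squares; apply: eq_imset => x; rewrite /mz /= ?(fv, fK, vK); perm4).
have K3 : (Bf :&: Bz <= Bv)%MS.
  apply: (@key V (mf M) (mz M) (ma M) (mv M) S) => //.
  all: try (by move=> x; rewrite /mz /= ?(fv, fK, vK)).
  all: try (by rewrite /S /squares; apply: eq_imset => x; rewrite /mz /= ?(fv, fK, vK); perm4).
set T := (Bv :&: Bf :&: Bz)%MS.
have t1 : \rank (Bv :&: Bf)%MS = \rank T by rewrite (@rk3 _ _ _ _ _ _ _ K1).
have t2 : \rank (Bv :&: Bz)%MS = \rank T by rewrite (@rk3 _ _ _ _ _ _ _ K2) /T -!capmxA (capmxC Bz).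
have t3 : \rank (Bf :&: Bz)%MS = \rank T by rewrite (@rk3 _ _ _ _ _ _ _ K3) /T capmxC capmxA.
have t1' : \rank (Bf :&: Bv)%MS = \rank T by rewrite capmxC.
have t2' : \rank (Bz :&: Bv)%MS = \rank T by rewrite capmxC.
have t3' : \rank (Bz :&: Bf)%MS = \rank T by rewrite capmxC.
pose D := (#|S|%:Z - (\rank Bv + \rank Bf + \rank Bz)%N%:Z + (\rank T)%:Z)%R.
suff HD : forall X, in_Gamma M X -> deficiency X = D.
  by move=> X Y HX HY; rewrite (HD X HX) (HD Y HY).
move=> X; rewrite /in_Gamma /=.
case=> [<-|[<-|[<-|[<-|[<-|[<-|[]]]]]]].
- rewrite (@def_eq V _ (mv M) (mf M) (mz M) (ma M) S) //.
  apply: ar; [|exact: rank_leq_col|by rewrite -t3 mxrank_sum_cap]; rewrite /Bv /Bf /Bz; lia.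
- rewrite (@def_eq V _ (mf M) (mv M) (mz M) (ma M) S) //.
  + apply: ar; [|exact: rank_leq_col|by rewrite -t2 mxrank_sum_cap]; rewrite /Bv /Bf /Bz; lia.
  + by apply: functional_extensionality => x; rewrite /mz /= fv.
  + by rewrite /S /squares; apply: eq_imset => x /=; rewrite ?(fv, fK, vK); perm4.
- rewrite (@def_eq V _ (mf M) (mz M) (mv M) (ma M) S) //.
  + apply: ar; [|exact: rank_leq_col|by rewrite -t2' mxrank_sum_cap]; rewrite /Bv /Bf /Bz; lia.
  + by apply: functional_extensionality => x; rewrite /mz /= ?(fv, fK, vK).
  + by rewrite /S /squares; apply: eq_imset => x /=; rewrite /mz /= ?(fv, fK, vK); perm4.
- rewrite (@def_eq V _ (mz M) (mf M) (mv M) (ma M) S) //.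
  + apply: ar; [|exact: rank_leq_col|by rewrite -t1' mxrank_sum_cap]; rewrite /Bv /Bf /Bz; lia.
  + by apply: functional_extensionality => x; rewrite /mz /= ?(fv, fK, vK).
  + by rewrite /S /squares; apply: eq_imset => x /=; rewrite /mz /= ?(fv, fK, vK); perm4.
- rewrite (@def_eq V _ (mz M) (mv M) (mf M) (ma M) S) //.
  + apply: ar; [|exact: rank_leq_col|by rewrite -t1 mxrank_sum_cap]; rewrite /Bv /Bf /Bz; lia.
  + by apply: functional_extensionality => x; rewrite /mz /= ?(fv, fK, vK).
  + by rewrite /S /squares; apply: eq_imset => x /=; rewrite /mz /= ?(fv, fK, vK); perm4.
- rewrite (@def_eq V _ (mv M) (mz M) (mf M) (ma M) S) //.
  + apply: ar; [|exact: rank_leq_col|by rewrite -t3' mxrank_sum_cap]; rewrite /Bv /Bf /Bz; lia.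
  + by apply: functional_extensionality => x; rewrite /mz /= ?(fv, fK, vK).
  + by rewrite /S /squares; apply: eq_imset => x /=; rewrite /mz /= ?(fv, fK, vK); perm4.
Qed.
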